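(* Let $S=s_1,\ldots,s_n$ be a sequence of nonnegative integers with mean $\mu$, let $\gamma>0$, $k$ a positive integer and $\epsilon>0$. Let $(L,\alpha,\beta)$ be an optimal solution of $\textsc{Geo}$ for $S,\gamma,k$. Let $\sigma=\frac{\mu}{1/n+\mu}$ and $\alpha'=\sigma^{\epsilon/k}$. If $\alpha\ge\alpha'$, then \[ \mathrm{score}_{\mathrm{geo}}(L,S;\alpha',\beta,\gamma)\le(1+\epsilon)\,\mathrm{score}_{\mathrm{geo}}(L,S;\alpha,\beta,\gamma). \]
   Context: A level sequence is $L=\ell_1,\ldots,\ell_n$ of integers with $0\le\ell_i\le k$; set $\ell_0=0$. The penalty is $\mathrm{pen}(x,y)=\max(y-x,0)\,\gamma\log n$. The geometric distribution is $p_{\mathrm{geo}}(s;\lambda)=(1-\lambda)\lambda^s$ (with $0^0=1$). For $0\le\alpha<1$, $0<\beta<1$: $\mathrm{score}_{\mathrm{geo}}(L,S;\alpha,\beta,\gamma)=\sum_{i=1}^n\big[-\log p_{\mathrm{geo}}(s_i;\beta\alpha^{\ell_i})+\mathrm{pen}(\ell_{i-1},\ell_i)\big]$. Problem $\textsc{Geo}$: given $S,\gamma,k$, find $L$, $\alpha$ and $\beta$ minimizing this score. *)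

(* Defs.v *)
(* concrete reals R, with Coquelicot's extended reals Rbar
   to represent -log 0 = +oo honestly. *)
From Stdlib Require Import Reals Lra List.
From Coquelicot Require Import Coquelicot.
Open Scope R_scope.

(* -log p_geo(s; lam), where p_geo(s; lam) = (1-lam) lam^s with 0^0 = 1.
   When lam = 0 and s > 0 the probability is 0, so -log is +oo. *)
Definition neglog_pgeo (s : nat) (lam : R) : Rbar :=
  if Req_EM_T lam 0 then
    (match s with O => Finite (- ln (1 - lam)) | S _ => p_infty end)
  else Finite (- ln ((1 - lam) * lam ^ s)).

Definition pen (gamma : R) (n : nat) (x y : nat) : R :=
  Rmax (INR y - INR x) 0 * gamma * ln (INR n).

(* sum_{i} [ -log p_geo(s_i; beta alpha^{l_i}) + pen(l_{i-1}, l_i) ],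
   with prev = l_{i-1}; n is the length of the full sequence S. *)
Fixpoint score_aux (n : nat) (prev : nat) (L S : list nat)
  (alpha beta gamma : R) : Rbar :=
  match L, S with
  | l :: L', s :: S' =>
      Rbar_plus
        (Rbar_plus (neglog_pgeo s (beta * alpha ^ l)) (Finite (pen gamma n prev l)))
        (score_aux n l L' S' alpha beta gamma)
  | _, _ => Finite 0
  end.

Definition score_geo (L S : list nat) (alpha beta gamma : R) : Rbar :=
  score_aux (length S) 0 L S alpha beta gamma.

Definition valid_levels (k : nat) (S L : list nat) : Prop :=
  length L = length S /\ List.Forall (fun l => (l <= k)%nat) L.

Definition valid_params (alpha beta : R) : Prop :=
  0 <= alpha < 1 /\ 0 < beta < 1.

Definition geo_optimal (S : list nat) (gamma : R) (k : nat)
  (L : list nat) (alpha beta : R) : Prop :=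
  valid_levels k S L /\ valid_params alpha beta /\
  forall L' alpha' beta', valid_levels k S L' -> valid_params alpha' beta' ->
    Rbar_le (score_geo L S alpha beta gamma) (score_geo L' S alpha' beta' gamma).

Definition mean (S : list nat) : R :=
  INR (fold_right Nat.add 0%nat S) / INR (length S).

(* x^y for x >= 0, y > 0, with 0^y = 0 (Stdlib's Rpower is junk at 0). *)
Definition rpow (x y : R) : R :=
  if Req_EM_T x 0 then 0 else Rpower x y.

(* Main.v *)
Require Import Defs.
From Stdlib Require Import Reals List Lra Lia.
From Coquelicot Require Import Coquelicot.
Open Scope R_scope.

Lemma pow_le_one x n : 0 <= x <= 1 -> x ^ n <= 1.
Proof.
  intros H. induction n as [|n IH]; simpl. lra.
  assert (0 <= x ^ n) by (apply pow_le; lra). nra.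
Qed.

Lemma neglog_fin s lam : (lam <> 0 \/ s = 0%nat) ->
  neglog_pgeo s lam = Finite (- ln ((1 - lam) * lam ^ s)).
Proof.
  intros H. unfold neglog_pgeo. destruct (Req_EM_T lam 0) as [e|e].
  - destruct H as [H|H]; [contradiction|]. subst s. simpl. rewrite Rmult_1_r. reflexivity.
  - reflexivity.
Qed.

Fixpoint sr (n prev : nat) (L S : list nat) (a b g : R) : R :=
  match L, S with
  | l :: L', s :: S' => - ln ((1 - b * a ^ l) * (b * a ^ l) ^ s) + pen g n prev l
                        + sr n l L' S' a b g
  | _, _ => 0
  end.

Lemma score_fin n p L S a b g : 0 < b -> (0 < a \/ List.Forall (fun s => s = 0%nat) S) ->
  score_aux n p L S a b g = Finite (sr n p L S a b g).
Proof.
  intros Hb. revert p S. induction L as [|l L IH]; intros p S H; destruct S as [|s S]; simpl; auto.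
  rewrite neglog_fin.
  - rewrite IH. reflexivity. destruct H as [H|H]; [left; auto| inversion H; auto].
  - destruct H as [H|H]; [left | right; inversion H; auto].
    apply Rgt_not_eq. apply Rmult_lt_0_compat; auto. apply pow_lt; auto.
Qed.

Lemma pen_nonneg g n p l : 0 < g -> (1 <= n)%nat -> 0 <= pen g n p l.
Proof.
  intros Hg Hn. unfold pen. apply Rmult_le_pos. apply Rmult_le_pos.
  apply Rmax_r. lra. rewrite <- ln_1. apply ln_le. lra. apply (le_INR 1). auto.
Qed.

Lemma term_bounds s lam : 0 <= lam < 1 -> (0 < lam \/ s = 0%nat) ->
  0 < (1 - lam) * lam ^ s <= 1.
Proof.
  intros H1 H2. split.
  - apply Rmult_lt_0_compat. lra. destruct H2 as [H2|H2]. apply pow_lt; auto. subst; simpl; lra.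
  - assert (lam ^ s <= 1) by (apply pow_le_one; lra).
    assert (0 <= lam ^ s) by (apply pow_le; lra). nra.
Qed.

Lemma term_nonneg s lam : 0 <= lam < 1 -> (0 < lam \/ s = 0%nat) ->
  0 <= - ln ((1 - lam) * lam ^ s).
Proof.
  intros H1 H2. destruct (term_bounds s lam H1 H2).
  assert (ln ((1 - lam) * lam ^ s) <= ln 1) by (apply ln_le; auto). rewrite ln_1 in H3. lra.
Qed.

Lemma ln4 : 1 <= ln 4.
Proof.
  replace 4 with (2*2) by lra. rewrite ln_mult by lra. pose proof ln_lt_2. lra.
Qed.

Lemma term_big s lam : 0 < lam < 1 -> (1 <= s)%nat -> 1 <= - ln ((1 - lam) * lam ^ s).
Proof.
  intros H1 H2. destruct s as [|s]. lia. simpl.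
  assert (lam ^ s <= 1) by (apply pow_le_one; lra).
  assert (0 < lam ^ s) by (apply pow_lt; lra).
  assert (0 < (1 - lam) * (lam * lam ^ s)) by (apply Rmult_lt_0_compat; nra).
  assert ((1 - lam) * lam <= /4) by (pose proof (Rle_0_sqr (lam - /2)); unfold Rsqr in *; nra).
  assert (0 <= (1 - lam) * lam) by nra.
  assert ((1 - lam) * (lam * lam ^ s) <= /4).
  { replace ((1 - lam) * (lam * lam ^ s)) with (((1 - lam) * lam) * lam ^ s) by ring.
    assert (((1 - lam) * lam) * lam ^ s <= ((1 - lam) * lam) * 1) by (apply Rmult_le_compat_l; lra).
    lra. }
  assert (ln ((1 - lam) * (lam * lam ^ s)) <= ln (/4)) by (apply ln_le; auto).
  rewrite ln_Rinv in H7 by lra. pose proof ln4. lra.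
Qed.

Lemma term_diff s l a a' b : 0 < a' <= a -> a < 1 -> 0 < b < 1 ->
  - ln ((1 - b * a' ^ l) * (b * a' ^ l) ^ s) <=
  - ln ((1 - b * a ^ l) * (b * a ^ l) ^ s) + INR s * (INR l * (ln a - ln a')).
Proof.
  intros Ha Ha1 Hb.
  assert (P : forall x, 0 < x <= a -> 0 < b * x ^ l < 1 /\ 0 < (b * x ^ l) ^ s
     /\ ln ((1 - b * x ^ l) * (b * x ^ l) ^ s) = ln (1 - b * x ^ l) + INR s * (ln b + INR l * ln x)).
  { intros x Hx. assert (0 < x ^ l) by (apply pow_lt; lra).
    assert (x ^ l <= 1) by (apply pow_le_one; lra).
    assert (0 < b * x ^ l < 1) by nra.
    assert (0 < (b * x ^ l) ^ s) by (apply pow_lt; lra).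
    split; auto. split; auto.
    rewrite ln_mult by lra. rewrite ln_pow by lra. rewrite ln_mult by lra. rewrite ln_pow by lra.
    reflexivity. }
  destruct (P a' ltac:(lra)) as [A1 [A2 A3]]. destruct (P a ltac:(lra)) as [B1 [B2 B3]].
  rewrite A3, B3.
  assert (b * a' ^ l <= b * a ^ l).
  { apply Rmult_le_compat_l. lra. apply pow_incr. lra. }
  assert (ln (1 - b * a ^ l) <= ln (1 - b * a' ^ l)) by (apply ln_le; lra).
  lra.
Qed.

Definition sumS (S : list nat) := fold_right Nat.add 0%nat S.

Lemma sr_main n p L S a a' b g k c : 0 < a' <= a -> a < 1 -> 0 < b < 1 ->
  length L = length S -> List.Forall (fun l => (l <= k)%nat) L ->
  (forall l, (l <= k)%nat -> INR l * (ln a - ln a') <= c) -> 0 <= c ->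
  sr n p L S a' b g <= sr n p L S a b g + c * INR (sumS S).
Proof.
  intros Ha Ha1 Hb. revert p S. induction L as [|l L IH]; intros p S HL HF Hc Hc0;
    destruct S as [|s S]; simpl in *; try discriminate.
  - lra.
  - inversion HF; subst. injection HL as HL.
    specialize (IH l S HL H2 Hc Hc0).
    pose proof (term_diff s l a a' b Ha Ha1 Hb).
    pose proof (Hc l H1). assert (0 <= INR s) by apply pos_INR.
    unfold sumS in *. simpl. rewrite plus_INR.
    assert (INR s * (INR l * (ln a - ln a')) <= INR s * c) by (apply Rmult_le_compat_l; auto).
    nra.
Qed.

Lemma sr_nonneg n p L S a b g : 0 <= a < 1 -> 0 < b < 1 -> 0 < g -> (1 <= n)%nat ->
  (0 < a \/ List.Forall (fun s => s = 0%nat) S) -> 0 <= sr n p L S a b g.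
Proof.
  intros Ha Hb Hg Hn. revert p S. induction L as [|l L IH]; intros p S H;
    destruct S as [|s S]; simpl; try lra.
  assert (0 <= b * a ^ l < 1).
  { assert (0 <= a ^ l) by (apply pow_le; lra). assert (a ^ l <= 1) by (apply pow_le_one; lra). nra. }
  pose proof (pen_nonneg g n p l Hg Hn).
  assert (0 <= - ln ((1 - b * a ^ l) * (b * a ^ l) ^ s)).
  { apply term_nonneg; auto. destruct H as [H|H]; [left|right; inversion H; auto].
    apply Rmult_lt_0_compat; [lra|]. apply pow_lt; lra. }
  assert (0 <= sr n l L S a b g). { apply IH. destruct H as [H|H]; [left; auto|inversion H; auto]. }
  lra.
Qed.

Lemma sr_big n p L S a b g : 0 < a < 1 -> 0 < b < 1 -> 0 < g -> (1 <= n)%nat ->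
  length L = length S -> (1 <= sumS S)%nat -> 1 <= sr n p L S a b g.
Proof.
  intros Ha Hb Hg Hn. revert p S. induction L as [|l L IH]; intros p S HL HS;
    destruct S as [|s S]; simpl in *; try discriminate.
  - unfold sumS in HS; simpl in HS; lia.
  - injection HL as HL.
  assert (0 < b * a ^ l < 1).
  { assert (0 < a ^ l) by (apply pow_lt; lra). assert (a ^ l <= 1) by (apply pow_le_one; lra). nra. }
  pose proof (pen_nonneg g n p l Hg Hn).
  pose proof (sr_nonneg n l L S a b g ltac:(lra) Hb Hg Hn (or_introl (proj1 Ha))).
  pose proof (term_nonneg s (b * a ^ l) ltac:(lra) (or_introl (proj1 H))).
  unfold sumS in HS; simpl in HS.
  destruct s as [|s].
  + simpl in HS. pose proof (IH l S HL HS). lra.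
  + pose proof (term_big (Datatypes.S s) (b * a ^ l) H ltac:(lia)). lra.
Qed.

Lemma sr_zero n p L S a a' b g : 0 <= a' <= a -> a < 1 -> 0 < b < 1 ->
  List.Forall (fun s => s = 0%nat) S -> sr n p L S a' b g <= sr n p L S a b g.
Proof.
  intros Ha Ha1 Hb. revert p S. induction L as [|l L IH]; intros p S HS;
    destruct S as [|s S]; simpl; try lra.
  inversion HS; subst. simpl. specialize (IH l S H2).
  assert (b * a' ^ l <= b * a ^ l).
  { apply Rmult_le_compat_l. lra. apply pow_incr. lra. }
  assert (0 <= a ^ l) by (apply pow_le; lra). assert (a ^ l <= 1) by (apply pow_le_one; lra).
  assert (ln ((1 - b * a ^ l) * 1) <= ln ((1 - b * a' ^ l) * 1)) by (apply ln_le; nra).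
  lra.
Qed.

Lemma score_nonneg n p L S a b g : 0 <= a < 1 -> 0 < b < 1 -> 0 < g -> (1 <= n)%nat ->
  Rbar_le (Finite 0) (score_aux n p L S a b g).
Proof.
  intros Ha Hb Hg Hn. revert p S. induction L as [|l L IH]; intros p S;
    destruct S as [|s S]; try (simpl; lra).
  change (Rbar_le (Finite 0) (Rbar_plus (Rbar_plus (neglog_pgeo s (b*a^l)) (Finite (pen g n p l))) (score_aux n l L S a b g))).
  replace (Finite 0) with (Rbar_plus (Rbar_plus (Finite 0) (Finite 0)) (Finite 0))
    by (simpl; f_equal; lra).
  apply Rbar_plus_le_compat; [apply Rbar_plus_le_compat|]; auto.
  - assert (0 <= b * a ^ l < 1).
    { assert (0 <= a ^ l) by (apply pow_le; lra). assert (a ^ l <= 1) by (apply pow_le_one; lra). nra. }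
    unfold neglog_pgeo. destruct (Req_EM_T (b * a ^ l) 0) as [e|e].
    + destruct s. simpl. rewrite e. rewrite Rminus_0_r, ln_1. lra. simpl. auto.
    + simpl. apply term_nonneg. auto. left. lra.
  - simpl. apply pen_nonneg; auto.
Qed.

Lemma sum0_forall S : sumS S = 0%nat -> List.Forall (fun s => s = 0%nat) S.
Proof.
  induction S as [|s S IH]; simpl; intros H; constructor; unfold sumS in *; simpl in H; try lia.
  apply IH. lia.
Qed.

Theorem lemma5 (S : list nat) (gamma : R) (k : nat) (eps : R)
  (L : list nat) (alpha beta : R) :
  (0 < length S)%nat -> 0 < gamma -> (0 < k)%nat -> 0 < eps ->
  geo_optimal S gamma k L alpha beta ->
  let n := INR (length S) in
  let mu := mean S in
  let sigma := mu / (1 / n + mu) in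
  let alpha' := rpow sigma (eps / INR k) in
  alpha' <= alpha ->
  Rbar_le (score_geo L S alpha' beta gamma)
          (Rbar_mult (Finite (1 + eps)) (score_geo L S alpha beta gamma)).
Proof.
  intros Hn Hg Hk He Hopt n mu sigma alpha' Ha'.
  destruct Hopt as [[HL HF] [[[Ha0 Ha1] Hb] _]].
  unfold score_geo.
  assert (Hn1 : (1 <= length S)%nat) by lia.
  assert (Hnpos : 0 < n) by (apply lt_0_INR; lia).
  assert (HkR : 0 < INR k) by (apply lt_0_INR; lia).
  set (T := sumS S).
  assert (Hsig : sigma = INR T / (1 + INR T)).
  { unfold sigma, mu, mean. fold n. change (fold_right Nat.add 0%nat S) with T.
    assert (0 <= INR T) by apply pos_INR. field. split; lra. }
  assert (Ha'0 : 0 <= alpha').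
  { unfold alpha', rpow. destruct (Req_EM_T sigma 0). lra. unfold Rpower. left; apply exp_pos. }
  destruct (Nat.eq_dec T 0) as [HT|HT].
  - pose proof (sum0_forall S HT) as HZ.
    rewrite !score_fin by (lra || auto). simpl.
    pose proof (sr_zero (length S) 0 L S alpha alpha' beta gamma ltac:(lra) Ha1 Hb HZ).
    pose proof (sr_nonneg (length S) 0 L S alpha beta gamma ltac:(lra) Hb Hg Hn1 (or_intror HZ)).
    nra.
  - destruct (Req_dec alpha 0) as [Hz|Hz].
    + assert (alpha' = alpha) by lra. rewrite H.
      pose proof (score_nonneg (length S) 0 L S alpha beta gamma ltac:(lra) Hb Hg Hn1) as Hx.
      destruct (score_aux (length S) 0 L S alpha beta gamma) as [r| |]; simpl in *.
      * nra.
      * unfold Rbar_mult, Rbar_mult'. destruct (Rle_dec 0 (1 + eps)); [|lra].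
        destruct (Rle_lt_or_eq_dec 0 (1 + eps) r); [simpl; auto|lra].
      * contradiction.
    + assert (HTR : 1 <= INR T) by (apply (le_INR 1); lia).
      assert (Hs0 : 0 < sigma < 1).
      { rewrite Hsig. split. apply Rdiv_lt_0_compat; lra.
        apply Rmult_lt_reg_r with (1 + INR T). lra. unfold Rdiv. rewrite Rmult_assoc, Rinv_l by lra. lra. }
      assert (Hla' : ln alpha' = eps / INR k * ln sigma).
      { unfold alpha', rpow. destruct (Req_EM_T sigma 0). lra. unfold Rpower. apply ln_exp. }
      assert (Ha'pos : 0 < alpha').
      { unfold alpha', rpow. destruct (Req_EM_T sigma 0). lra. unfold Rpower. apply exp_pos. }
      assert (Hls : ln sigma < 0).
      { rewrite <- ln_1. apply ln_increasing; lra. }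
      assert (Hla : ln alpha <= 0).
      { rewrite <- ln_1. apply ln_le; lra. }
      assert (Hmain : - ln sigma * INR T <= 1).
      { rewrite <- ln_Rinv by lra.
        assert (/ sigma = 1 + / INR T) by (rewrite Hsig; field; lra).
        rewrite H.
        assert (ln (1 + / INR T) <= / INR T).
        { rewrite <- (ln_exp (/ INR T)) at 2. apply ln_le.
          assert (0 < / INR T) by (apply Rinv_0_lt_compat; lra). lra.
          left. apply exp_ineq1. apply Rgt_not_eq, Rinv_0_lt_compat. lra. }
        assert (/ INR T * INR T = 1) by (field; lra).
        nra. }
      rewrite !score_fin by (lra || auto). simpl.
      pose proof (sr_main (length S) 0 L S alpha alpha' beta gamma k (- eps * ln sigma)
        ltac:(lra) Ha1 Hb HL HF) as Hm.
      assert (Hc : forall l, (l <= k)%nat -> INR l * (ln alpha - ln alpha') <= - eps * ln sigma).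
      { intros l Hl. rewrite Hla'. assert (INR l <= INR k) by (apply le_INR; auto).
        assert (0 <= INR l) by apply pos_INR.
        assert (INR l * (ln alpha - eps / INR k * ln sigma) <= INR l * (- (eps / INR k) * ln sigma)).
        { apply Rmult_le_compat_l; auto. lra. }
        assert (INR l * (- (eps / INR k) * ln sigma) <= INR k * (- (eps / INR k) * ln sigma)).
        { apply Rmult_le_compat_r; auto. assert (0 < eps / INR k) by (apply Rdiv_lt_0_compat; lra). nra. }
        replace (INR k * (- (eps / INR k) * ln sigma)) with (- eps * ln sigma) in H2 by (field; lra).
        lra. }
      specialize (Hm Hc ltac:(nra)). fold T in Hm.
      pose proof (sr_big (length S) 0 L S alpha beta gamma ltac:(lra) Hb Hg Hn1 HL ltac:(lia)).
      nra.
Qed.
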